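(* Let $X\subset\mathbb R^2$ and let $\{\alpha_t:[0,1]\to X\}$ be a countable collection of nonconstant oscillatory geodesics, each parameterized proportional to total oscillation. Then there exists a line $l$ in the plane that is transverse to $\alpha_t$ for every $t$.
   Context: Total oscillation: let $g:\mathbb R^2\to[-1,1]$ depend only on $x_1$ with $g=-1$ for $x_1\le-3$, $\frac12(x_1+1)$ on $[-3,-1]$, $0$ on $[-1,1]$, $\frac12(x_1-1)$ on $[1,3]$, $1$ for $x_1\ge3$; for distinct parallel lines $(P,Q)$, $g_{(P,Q)}=g\circ h_{(P,Q)}$ with $h_{(P,Q)}$ a similarity sending $P$ to $\{x_1=-3\}$, $Q$ to $\{x_1=3\}$; $o(f,(P,Q))=\sup-\sum_{i=1}^k g_{(P,Q)}(f(a_{i-1}))g_{(P,Q)}(f(a_i))$ over finite $a\le a_0\le\dots\le a_k\le b$; with a fixed countable dense set $\{(P_i,Q_i)\}$ of pairs of parallel lines, $\mathcal T(\alpha)=\sum_i2^{-i}\frac{o(\alpha,(P_i,Q_i))}{1+o(\alpha,(P_i,Q_i))}$. An oscillatory geodesic in $X$ is a path of minimal $\mathcal T$ among paths in $X$ homotopic to it rel endpoints; $\alpha:[0,1]\to X$ is parameterized proportional to total oscillation if $\mathcal T(\alpha|_{[0,t]})=t\,\mathcal T(\alpha)$ for all $t$. A line $l$ is transverse to a path $\gamma:[a,b]\to X$ if no nonempty open interval $(c,d)\subset[a,b]$ is mapped by $\gamma$ into a line segment parallel to $l$. *)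

(* Defs.v *)
From Stdlib Require Import Reals List.
From Coquelicot Require Import Coquelicot.
Open Scope R_scope.

Definition pt := (R * R)%type.
Definition dot (x y : pt) : R := fst x * fst y + snd x * snd y.
Definition dist2 (x y : pt) : R :=
  sqrt ((fst x - fst y)^2 + (snd x - snd y)^2).

Definition gfun (x : R) : R :=
  if Rle_dec x (-3) then -1
  else if Rle_dec x (-1) then (x + 1) / 2
  else if Rle_dec x 1 then 0
  else if Rle_dec x 3 then (x - 1) / 2
  else 1.

Definition g (x : pt) : R := gfun (fst x).

(* An (ordered) pair of distinct parallel lines (P,Q):
   P = {x | x . n = c1},  Q = {x | x . n = c2}, with n a unit vector, c1 <> c2. *)
Record linepair := LP { lp_n : pt; lp_c1 : R; lp_c2 : R }.

Definition valid_lp (L : linepair) : Prop :=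
  dot (lp_n L) (lp_n L) = 1 /\ lp_c1 L <> lp_c2 L.

(* A similarity h_(P,Q) sending P to {x_1 = -3} and Q to {x_1 = 3}
   (rotation x |-> (x.n, x.n^perp), scaling by 6/(c2-c1), translation). *)
Definition h_lp (L : linepair) (x : pt) : pt :=
  let n := lp_n L in
  let nperp := (- snd n, fst n) in
  let k := 6 / (lp_c2 L - lp_c1 L) in
  (-3 + k * (dot x n - lp_c1 L), k * dot x nperp).

Definition g_lp (L : linepair) (x : pt) : R := g (h_lp L x).

Fixpoint chain_le (x : R) (l : list R) : Prop :=
  match l with
  | nil => True
  | y :: l' => x <= y /\ chain_le y l'
  end.

Fixpoint last_of (x : R) (l : list R) : R :=
  match l with
  | nil => x
  | y :: l' => last_of y l'
  end.

Definition part_ok (a b a0 : R) (rest : list R) : Prop :=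
  a <= a0 /\ chain_le a0 rest /\ last_of a0 rest <= b.

Fixpoint osc_sum (G : pt -> R) (f : R -> pt) (x : R) (l : list R) : R :=
  match l with
  | nil => 0
  | y :: l' => - (G (f x) * G (f y)) + osc_sum G f y l'
  end.

Definition osc (L : linepair) (f : R -> pt) (a b : R) : Rbar :=
  Lub_Rbar (fun v => exists a0 rest, part_ok a b a0 rest /\
                                     v = osc_sum (g_lp L) f a0 rest).

Definition frac_o (o : Rbar) : R :=
  match o with
  | Finite x => x / (1 + x)
  | p_infty => 1
  | m_infty => 0
  end.

(* Total oscillation T(f|[a,b]) w.r.t. the fixed enumeration E (E i = (P_{i+1},Q_{i+1})). *)
Definition total_osc (E : nat -> linepair) (f : R -> pt) (a b : R) : R :=
  Series (fun i => (/ 2) ^ (S i) * frac_o (osc (E i) f a b)).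

(* E is a countable dense set of pairs of parallel lines: every pair is
   approximated, in either of its two (n,c1,c2)/(-n,-c1,-c2) representations. *)
Definition close_lp (eps : R) (L M : linepair) : Prop :=
  dist2 (lp_n L) (lp_n M) < eps /\ Rabs (lp_c1 L - lp_c1 M) < eps /\
  Rabs (lp_c2 L - lp_c2 M) < eps.

Definition neg_lp (L : linepair) : linepair :=
  LP (- fst (lp_n L), - snd (lp_n L)) (- lp_c1 L) (- lp_c2 L).

Definition dense_enum (E : nat -> linepair) : Prop :=
  (forall i, valid_lp (E i)) /\
  (forall L, valid_lp L -> forall eps, eps > 0 ->
     exists i, close_lp eps (E i) L \/ close_lp eps (E i) (neg_lp L)).

Definition cont_on (f : R -> pt) (a b : R) : Prop :=
  forall s, a <= s <= b -> forall eps, eps > 0 -> exists delta, delta > 0 /\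
    forall s', a <= s' <= b -> Rabs (s' - s) < delta -> dist2 (f s') (f s) < eps.

Definition is_path (X : pt -> Prop) (f : R -> pt) : Prop :=
  cont_on f 0 1 /\ forall s, 0 <= s <= 1 -> X (f s).

Definition homotopic_rel (X : pt -> Prop) (alpha beta : R -> pt) : Prop :=
  exists H : R -> R -> pt,
    (forall s u, 0 <= s <= 1 -> 0 <= u <= 1 -> X (H s u)) /\
    (forall s u, 0 <= s <= 1 -> 0 <= u <= 1 -> forall eps, eps > 0 ->
       exists delta, delta > 0 /\ forall s' u', 0 <= s' <= 1 -> 0 <= u' <= 1 ->
         Rabs (s' - s) < delta -> Rabs (u' - u) < delta ->
         dist2 (H s' u') (H s u) < eps) /\
    (forall s, 0 <= s <= 1 -> H s 0 = alpha s /\ H s 1 = beta s) /\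
    (forall u, 0 <= u <= 1 -> H 0 u = alpha 0 /\ H 1 u = alpha 1).

Definition osc_geodesic (E : nat -> linepair) (X : pt -> Prop) (alpha : R -> pt) : Prop :=
  is_path X alpha /\
  forall beta, is_path X beta -> homotopic_rel X alpha beta ->
    total_osc E alpha 0 1 <= total_osc E beta 0 1.

Definition prop_param (E : nat -> linepair) (alpha : R -> pt) : Prop :=
  forall t, 0 <= t <= 1 -> total_osc E alpha 0 t = t * total_osc E alpha 0 1.

Definition nonconstant (alpha : R -> pt) : Prop :=
  exists s, 0 <= s <= 1 /\ alpha s <> alpha 0.

Definition transverse (v : pt) (gamma : R -> pt) (a b : R) : Prop :=
  ~ (exists c d, a <= c /\ c < d /\ d <= b /\
       exists q r0 r1, forall s, c < s < d ->
         exists r, r0 <= r <= r1 /\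
           gamma s = (fst q + r * fst v, snd q + r * snd v)).

(* Main.v *)
Require Import Defs.
From Stdlib Require Import Reals List.
From Coquelicot Require Import Coquelicot.
From Stdlib Require Import Lra Lia Psatz Classical ClassicalEpsilon FunctionalExtensionality.
From Stdlib Require Cantor.
Open Scope R_scope.

Lemma prod_bound (x e eps : R) : -eps < e < eps ->
  - (Rabs x * eps) <= x * e <= Rabs x * eps.
Proof.
  intros [H1 H2]. unfold Rabs; destruct (Rcase_abs x); split; nra.
Qed.

Lemma test (a b c eps : R) : a*b <= eps -> a*b + c <= eps + c.
Proof. intros. lra. Qed.

Fixpoint nest (u : nat -> R) (n : nat) : R * R :=
  match n with
  | O => (0, 1)
  | S n => let (a, b) := nest u n in
           if Rle_dec (u n) ((a + b) / 2) then ((a + 2 * b) / 3, b)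
           else (a, (2 * a + b) / 3)
  end.

Lemma nest_step u n :
  fst (nest u n) < snd (nest u n) /\
  fst (nest u n) <= fst (nest u (S n)) /\ snd (nest u (S n)) <= snd (nest u n) /\
  fst (nest u (S n)) < snd (nest u (S n)) /\
  ~ (fst (nest u (S n)) <= u n <= snd (nest u (S n))).
Proof.
  induction n as [|n IH].
  - simpl. destruct (Rle_dec (u 0%nat) ((0 + 1) / 2)); simpl; lra.
  - destruct IH as [_ [_ [_ [H _]]]].
    change (nest u (S (S n))) with
      (let (a, b) := nest u (S n) in
           if Rle_dec (u (S n)) ((a + b) / 2) then ((a + 2 * b) / 3, b)
           else (a, (2 * a + b) / 3)).
    destruct (nest u (S n)) as [a b]. simpl in H |- *.
    destruct (Rle_dec (u (S n)) ((a + b) / 2)); simpl; lra.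
Qed.

Lemma nest_mono u m n : (m <= n)%nat ->
  fst (nest u m) <= fst (nest u n) /\ snd (nest u n) <= snd (nest u m).
Proof.
  induction 1. lra.
  destruct (nest_step u m0) as [_ [A [B _]]]. lra.
Qed.

Lemma nest_ab u m n : fst (nest u m) <= snd (nest u n).
Proof.
  destruct (nest_mono u m (max m n)) as [A _]. lia.
  destruct (nest_mono u n (max m n)) as [_ B]. lia.
  destruct (nest_step u (max m n)) as [C _]. lra.
Qed.

Lemma R_not_countable (u : nat -> R) : exists x, forall n, x <> u n.
Proof.
  destruct (completeness (fun r => exists n, r = fst (nest u n))) as [x [Hub Hlub]].
  - exists (snd (nest u 0)). intros r [n ->]. apply nest_ab.
  - exists (fst (nest u 0)). eauto.
  - exists x. intros n Hx.
    destruct (nest_step u n) as [_ [_ [_ [_ H]]]]. apply H.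
    rewrite <- Hx. split.
    + apply Hub. eauto.
    + apply Hlub. intros r [m ->]. apply nest_ab.
Qed.


Lemma gfun_lo x : x <= -3 -> gfun x = -1.
Proof. intros; unfold gfun; destruct (Rle_dec x (-3)); lra. Qed.

Lemma gfun_hi x : 3 <= x -> gfun x = 1.
Proof.
  intros; unfold gfun.
  destruct (Rle_dec x (-3)); [lra|].
  destruct (Rle_dec x (-1)); [lra|].
  destruct (Rle_dec x 1); [lra|].
  destruct (Rle_dec x 3); [|lra]. assert (x = 3) by lra. subst. field.
Qed.

Lemma h_fst M x : lp_c2 M - lp_c1 M <> 0 ->
  fst (h_lp M x) = -3 + 6 * ((dot x (lp_n M) - lp_c1 M) / (lp_c2 M - lp_c1 M)).
Proof. intros. unfold h_lp. simpl. unfold Rdiv. ring. Qed.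

Lemma ratio_le0 u den : (den > 0 /\ u <= 0) \/ (den < 0 /\ u >= 0) -> u / den <= 0.
Proof.
  intros [[A B]|[A B]]; unfold Rdiv.
  - assert (0 < / den) by (apply Rinv_0_lt_compat; lra). nra.
  - assert (/ den < 0) by (apply Rinv_lt_0_compat; lra). nra.
Qed.

Lemma ratio_ge1 u den : (den > 0 /\ u >= den) \/ (den < 0 /\ u <= den) -> u / den >= 1.
Proof.
  intros H. assert (den <> 0) by lra.
  replace (u / den) with (1 + (u - den) / den) by (field; auto).
  assert ((u - den) / den >= 0); [|lra].
  destruct H as [[A B]|[A B]]; unfold Rdiv.
  - assert (0 < / den) by (apply Rinv_0_lt_compat; lra). nra.
  - assert (/ den < 0) by (apply Rinv_lt_0_compat; lra). nra.
Qed.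

Lemma sep_g M x0 xs :
  (dot x0 (lp_n M) <= lp_c1 M /\ lp_c1 M < lp_c2 M /\ lp_c2 M <= dot xs (lp_n M)) \/
  (dot x0 (lp_n M) >= lp_c1 M /\ lp_c1 M > lp_c2 M /\ lp_c2 M >= dot xs (lp_n M)) ->
  g_lp M x0 = -1 /\ g_lp M xs = 1.
Proof.
  intros H. assert (Hd : lp_c2 M - lp_c1 M <> 0) by lra.
  unfold g_lp, g. rewrite !h_fst by exact Hd. split.
  - apply gfun_lo.
    assert ((dot x0 (lp_n M) - lp_c1 M) / (lp_c2 M - lp_c1 M) <= 0); [|lra].
    apply ratio_le0; lra.
  - apply gfun_hi.
    assert ((dot xs (lp_n M) - lp_c1 M) / (lp_c2 M - lp_c1 M) >= 1); [|lra].
    apply ratio_ge1; lra.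
Qed.

Lemma dist2_comp a b eps : dist2 a b < eps ->
  Rabs (fst a - fst b) < eps /\ Rabs (snd a - snd b) < eps.
Proof.
  unfold dist2. intros H. split.
  - eapply Rle_lt_trans; [|exact H].
    rewrite <- sqrt_Rsqr_abs. apply sqrt_le_1_alt. rewrite <- !Rsqr_pow2.
    pose proof (Rle_0_sqr (snd a - snd b)). lra.
  - eapply Rle_lt_trans; [|exact H].
    rewrite <- sqrt_Rsqr_abs. apply sqrt_le_1_alt. rewrite <- !Rsqr_pow2.
    pose proof (Rle_0_sqr (fst a - fst b)). lra.
Qed.

Lemma abs_bnd e eps : Rabs e < eps -> -eps < e < eps.
Proof. unfold Rabs; destruct (Rcase_abs e); lra. Qed.

Lemma separate E x0 xs : dense_enum E -> x0 <> xs ->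
  exists i, g_lp (E i) x0 = -1 /\ g_lp (E i) xs = 1.
Proof.
  intros [_ Hd] Hne.
  destruct x0 as [a1 a2], xs as [b1 b2].
  set (w1 := b1 - a1). set (w2 := b2 - a2).
  assert (HD2 : w1*w1 + w2*w2 > 0).
  { destruct (Req_dec w1 0); destruct (Req_dec w2 0).
    - exfalso. apply Hne. unfold w1, w2 in *. f_equal; lra.
    - nra. - nra. - nra. }
  set (D := sqrt (w1*w1 + w2*w2)).
  assert (HD : D > 0) by (apply sqrt_lt_R0; lra).
  assert (HDD : D * D = w1*w1 + w2*w2) by (apply sqrt_sqrt; lra).
  set (n := (w1 / D, w2 / D)).
  set (b := dot (a1, a2) n).
  set (L := LP n (b + D/3) (b + 2*D/3)).
  assert (Hv : valid_lp L).
  { split; simpl. unfold dot, n; simpl. replace (w1 / D * (w1 / D) + w2 / D * (w2 / D)) with ((w1*w1+w2*w2) / (D*D)) by (field; lra). rewrite <- HDD. field. lra. lra. }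

  assert (Hbs : dot (b1, b2) n = b + D).
  { unfold b, dot, n; simpl.
    assert (b1*(w1/D)+b2*(w2/D) - (a1*(w1/D)+a2*(w2/D)) = (w1*w1+w2*w2)/D)
      by (unfold w1, w2; field; lra).
    rewrite <- HDD in H. replace (D*D/D) with D in H by (field; lra). lra. }
  set (K := Rabs a1 + Rabs a2 + Rabs b1 + Rabs b2 + 2).
  assert (HK : K >= 2) by (unfold K; pose proof (Rabs_pos a1); pose proof (Rabs_pos a2);
    pose proof (Rabs_pos b1); pose proof (Rabs_pos b2); lra).
  set (eps := D / (3 * K)).
  assert (Heps : eps > 0) by (unfold eps; apply Rdiv_lt_0_compat; lra).
  assert (HeK : eps * K = D / 3) by (unfold eps; field; lra).
  destruct (Hd L Hv eps Heps) as [i Hi].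
  exists i. apply sep_g.
  destruct (E i) as [[m1 m2] c1 c2]. simpl.
  unfold dot in *. simpl in *.
  destruct Hi as [[Hn [Hc1 Hc2]]|[Hn [Hc1 Hc2]]];
    apply dist2_comp in Hn; simpl in Hn; destruct Hn as [Hn1 Hn2];
    apply abs_bnd in Hn1, Hn2, Hc1, Hc2.
  - left.
    pose proof (prod_bound a1 _ _ Hn1). pose proof (prod_bound a2 _ _ Hn2).
    pose proof (prod_bound b1 _ _ Hn1). pose proof (prod_bound b2 _ _ Hn2).
    assert (Hx : eps * K = eps * Rabs a1 + eps * Rabs a2 + eps * Rabs b1 + eps * Rabs b2 + 2 * eps)
      by (unfold K; ring).
    unfold b in *. unfold dot in *. simpl in *.
    repeat split; nra.
  - right.
    pose proof (prod_bound a1 _ _ Hn1). pose proof (prod_bound a2 _ _ Hn2).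
    pose proof (prod_bound b1 _ _ Hn1). pose proof (prod_bound b2 _ _ Hn2).
    assert (Hx : eps * K = eps * Rabs a1 + eps * Rabs a2 + eps * Rabs b1 + eps * Rabs b2 + 2 * eps)
      by (unfold K; ring).
    unfold b in *. unfold dot in *. simpl in *.
    repeat split; nra.
Qed.

Lemma chain_map (h : R -> R) : (forall x y, x <= y -> h x <= h y) ->
  forall l x, chain_le x l -> chain_le (h x) (map h l).
Proof. intros Hh l; induction l as [|y l IH]; simpl; intros x H; auto.
  destruct H; split; auto. Qed.

Lemma last_map (h : R -> R) l x : last_of (h x) (map h l) = h (last_of x l).
Proof. revert x; induction l; simpl; auto. Qed.

Lemma chain_bounds l x : chain_le x l -> forall y, In y (x :: l) -> x <= y <= last_of x l.
Proof.
  revert x; induction l as [|z l IH]; simpl; intros x H y Hy.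
  - destruct Hy as [<-|[]]. lra.
  - destruct H as [H1 H2]. destruct Hy as [<-|Hy].
    + specialize (IH z H2 z (or_introl eq_refl)). lra.
    + specialize (IH z H2 y Hy). lra.
Qed.

Lemma osc_sum_map G f (h : R -> R) l x :
  (forall y, In y (x :: l) -> f (h y) = f y) ->
  osc_sum G f (h x) (map h l) = osc_sum G f x l.
Proof.
  revert x; induction l as [|z l IH]; simpl; intros x H; auto.
  rewrite IH by (intros; apply H; simpl in *; tauto).
  rewrite (H x), (H z) by tauto. reflexivity.
Qed.

Lemma osc_const L f c d : 0 <= c <= d ->
  (forall s, c <= s <= d -> f s = f c) -> osc L f 0 c = osc L f 0 d.
Proof.
  intros Hcd Hf. unfold osc. apply Lub_Rbar_eqset. intros v; split.
  - intros [a0 [rest [[H1 [H2 H3]] ->]]]. exists a0, rest. split; auto.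
    split; [lra|split; auto; lra].
  - intros [a0 [rest [[H1 [H2 H3]] ->]]].
    exists (Rmin a0 c), (map (fun s => Rmin s c) rest). split.
    + split; [|split].
      * apply Rmin_glb; lra.
      * apply (chain_map (fun s => Rmin s c)); auto. intros x y Hxy. unfold Rmin.
        destruct (Rle_dec x c), (Rle_dec y c); lra.
      * rewrite (last_map (fun s => Rmin s c)). apply Rmin_r.
    + symmetry. apply (osc_sum_map _ _ (fun s => Rmin s c)). intros y Hy.
      pose proof (chain_bounds rest a0 H2 y Hy). unfold Rmin.
      destruct (Rle_dec y c); auto. symmetry. apply Hf. lra.
Qed.

Lemma osc_ge L f b v a0 rest : part_ok 0 b a0 rest -> v = osc_sum (g_lp L) f a0 rest ->
  Rbar_le v (osc L f 0 b).
Proof.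
  intros. unfold osc. destruct (Lub_Rbar_correct (fun v => exists a0 rest, part_ok 0 b a0 rest /\
                                     v = osc_sum (g_lp L) f a0 rest)) as [Hub _].
  apply Hub. eauto.
Qed.

Lemma frac_bounds L f b : 0 <= b -> 0 <= frac_o (osc L f 0 b) <= 1.
Proof.
  intros Hb. assert (H := osc_ge L f b 0 0 nil).
  assert (H' : Rbar_le 0 (osc L f 0 b)).
  { apply H. - split; [lra|split; simpl; auto]. - reflexivity. }
  destruct (osc L f 0 b) as [x| |]; simpl in *; try lra.
  assert (0 < 1 + x) by lra. split.
  - apply Rdiv_le_0_compat; lra.
  - apply Rmult_le_reg_r with (1+x); auto. unfold Rdiv. rewrite Rmult_assoc, Rinv_l; lra.
Qed.

Lemma series_pos (a : nat -> R) i0 :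
  (forall n, 0 <= a n <= (/2)^n) -> 0 < a i0 -> 0 < Series a.
Proof.
  intros Ha Hi.
  assert (Hex : ex_series a).
  { apply (@ex_series_le R_AbsRing R_CompleteNormedModule a (fun n => (/2)^n)).
    - intros n. rewrite Rabs_pos_eq; apply Ha.
    - apply ex_series_geom. rewrite Rabs_pos_eq; lra. }
  assert (Hl : Un_cv (fun n => sum_f_R0 a n) (Series a)).
  { apply (proj1 (is_series_Reals a (Series a))). apply Series_correct. exact Hex. }
  pose proof (sum_incr a i0 (Series a) Hl (fun n => proj1 (Ha n))).
  assert (a i0 <= sum_f_R0 a i0).
  { destruct i0. simpl. lra. rewrite tech5.
    pose proof (cond_pos_sum a i0 (fun n => proj1 (Ha n))). lra. }
  lra.
Qed.

Lemma dist2_zero x y : (forall eps, eps > 0 -> dist2 x y < eps) -> x = y.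
Proof.
  intros H. destruct x as [a b], y as [c d]. unfold dist2 in H; simpl in H.
  set (SS := (a - c)^2 + (b - d)^2) in H.
  assert (HS : 0 <= SS) by (unfold SS; rewrite <- !Rsqr_pow2;
    pose proof (Rle_0_sqr (a-c)); pose proof (Rle_0_sqr (b-d)); lra).
  assert (sqrt SS = 0).
  { destruct (Rle_lt_dec (sqrt SS) 0). pose proof (sqrt_pos SS); lra.
    specialize (H _ r). exfalso; exact (Rlt_irrefl _ H). }
  apply sqrt_eq_0 in H0; auto. unfold SS in H0. rewrite <- !Rsqr_pow2 in H0.
  pose proof (Rle_0_sqr (a-c)); pose proof (Rle_0_sqr (b-d)).
  assert (Rsqr (a - c) = 0) by lra. assert (Rsqr (b - d) = 0) by lra.
  apply Rsqr_eq_0 in H3, H4. f_equal; lra.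
Qed.

Lemma cont_end f c d P : cont_on f 0 1 -> 0 <= c -> c < d -> d <= 1 ->
  (forall s, c < s < d -> f s = P) -> f c = P /\ f d = P.
Proof.
  intros Hc H0 H1 H2 Hf. split; symmetry; apply dist2_zero; intros eps He.
  - destruct (Hc c ltac:(lra) eps He) as [del [Hdel Hd]].
    set (s := c + Rmin del (d - c) / 2).
    assert (Hm : 0 < Rmin del (d-c)) by (apply Rmin_glb_lt; lra).
    assert (Hm2 : Rmin del (d-c) <= d - c) by apply Rmin_r.
    assert (Hm3 : Rmin del (d-c) <= del) by apply Rmin_l.
    rewrite <- (Hf s) by (unfold s; lra). apply Hd; unfold s.
    lra. rewrite Rabs_pos_eq; lra.
  - destruct (Hc d ltac:(lra) eps He) as [del [Hdel Hd]].
    set (s := d - Rmin del (d - c) / 2).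
    assert (Hm : 0 < Rmin del (d-c)) by (apply Rmin_glb_lt; lra).
    assert (Hm2 : Rmin del (d-c) <= d - c) by apply Rmin_r.
    assert (Hm3 : Rmin del (d-c) <= del) by apply Rmin_l.
    rewrite <- (Hf s) by (unfold s; lra). apply Hd; unfold s.
    lra. rewrite Rabs_left; lra.
Qed.

Lemma Tpos E f : dense_enum E -> nonconstant f -> 0 < total_osc E f 0 1.
Proof.
  intros HE [s [Hs Hne]].
  destruct (separate E (f 0) (f s) HE (fun e => Hne (eq_sym e))) as [i [Hi1 Hi2]].
  unfold total_osc. apply series_pos with i.
  - intros n. pose proof (frac_bounds (E n) f 1 ltac:(lra)).
    assert (0 <= (/2)^n) by (apply pow_le; lra).
    simpl. split; nra.
  - assert (Hge : Rbar_le 1 (osc (E i) f 0 1)).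
    { apply (osc_ge _ _ _ _ 0 (s :: nil)).
      - split; [lra|split; simpl; [split; [lra|auto]|lra]].
      - simpl. rewrite Hi1, Hi2. ring. }
    assert (0 < frac_o (osc (E i) f 0 1)).
    { destruct (osc (E i) f 0 1) as [x| |]; simpl in *; try lra.
      apply Rdiv_lt_0_compat; lra. }
    assert (0 < (/2)^(S i)) by (apply pow_lt; lra). nra.
Qed.

Lemma NC E X f : dense_enum E -> nonconstant f -> osc_geodesic E X f -> prop_param E f ->
  forall c d, 0 <= c -> c < d -> d <= 1 ->
  exists s1 s2, c < s1 < d /\ c < s2 < d /\ f s1 <> f s2.
Proof.
  intros HE Hnc [[Hcont _] _] Hpp c d H0 H1 H2.
  apply NNPP. intros Hn.
  assert (Hconst : forall s, c < s < d -> f s = f ((c + d) / 2)).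
  { intros s Hs. apply NNPP. intros Hne. apply Hn. exists s, ((c+d)/2).
    split; auto. split; [lra|auto]. }
  destruct (cont_end f c d _ Hcont H0 H1 H2 Hconst) as [Ec Ed].
  assert (Heq : total_osc E f 0 c = total_osc E f 0 d).
  { unfold total_osc. apply Series_ext. intros n. f_equal. f_equal.
    apply osc_const. lra. intros s Hs.
    destruct (Req_dec s c). subst; auto.
    destruct (Req_dec s d). subst. congruence.
    rewrite Hconst by lra. congruence. }
  rewrite (Hpp c ltac:(lra)), (Hpp d ltac:(lra)) in Heq.
  pose proof (Tpos E f HE Hnc). nra.
Qed.

Lemma div_lt_l a b M : M > 0 -> a * M < b -> a < b / M.
Proof. intros HM H. replace a with ((a*M)/M) by (field; lra).
  unfold Rdiv. apply Rmult_lt_compat_r; auto. apply Rinv_0_lt_compat; lra. Qed.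

Lemma div_le_r a b M : M > 0 -> a <= b * M -> a / M <= b.
Proof. intros HM H. replace b with ((b*M)/M) by (field; lra).
  unfold Rdiv. apply Rmult_le_compat_r; auto. left; apply Rinv_0_lt_compat; lra. Qed.

Lemma grid c d : 0 <= c -> c < d -> exists N j : nat,
  c <= INR j / INR (S N) /\ INR (S j) / INR (S N) <= d.
Proof.
  intros H0 H1.
  assert (Hp : 0 <= 2 / (d - c)) by (left; apply Rdiv_lt_0_compat; lra).
  destruct (nfloor_ex _ Hp) as [N [_ HN]].
  set (M := INR (S N)). assert (HM : M = INR N + 1) by (unfold M; apply S_INR).
  assert (HM0 : M > 0) by (pose proof (pos_INR N); lra).
  assert (H2 : 2 < (d - c) * M).
  { assert (2 / (d-c) * (d-c) < M * (d - c)) by (apply Rmult_lt_compat_r; lra).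
    replace (2 / (d-c) * (d-c)) with 2 in H by (field; lra). lra. }
  assert (Hq : 0 <= c * M) by nra.
  destruct (nfloor_ex _ Hq) as [j [Hj1 Hj2]].
  exists N, (S j). split.
  - left. apply div_lt_l; auto. rewrite (S_INR j). fold M. lra.
  - apply div_le_r; auto. rewrite (S_INR (S j)), (S_INR j). fold M. lra.
Qed.

Theorem lemma4p6 :
  forall (E : nat -> linepair), dense_enum E ->
  forall (X : pt -> Prop) (I : Type) (enc : I -> nat),
    (forall t1 t2, enc t1 = enc t2 -> t1 = t2) ->
  forall alpha : I -> R -> pt,
    (forall t, nonconstant (alpha t) /\ osc_geodesic E X (alpha t) /\
               prop_param E (alpha t)) ->
  exists (p v : pt), v <> (0, 0) /\ forall t, transverse v (alpha t) 0 1.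
Proof.
  intros E HE X I enc Henc alpha Hal.
  set (P := fun (k N j : nat) (y : R) => exists t, enc t = k /\ exists q : pt,
        forall s, INR j / INR (S N) < s < INR (S j) / INR (S N) ->
        exists r, alpha t s = (fst q + r * 1, snd q + r * y)).
  set (slope := fun k N j => epsilon (inhabits 0) (P k N j)).
  set (u := fun m => let (k, p) := Cantor.of_nat m in let (N, j) := Cantor.of_nat p in
                     slope k N j).
  destruct (R_not_countable u) as [y Hy].
  exists (0, 0), (1, y). split.
  { intros H. injection H. lra. }
  intros t [c [d [Hc [Hcd [Hd [q [r0 [r1 Hseg]]]]]]]].
  destruct (grid c d Hc Hcd) as [N [j [Hj1 Hj2]]].
  assert (HPy : P (enc t) N j y).
  { exists t. split; auto. exists q. intros s Hs.
    destruct (Hseg s ltac:(lra)) as [r [_ Hr]]. exists r. exact Hr. }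
  assert (Hsl := epsilon_spec (inhabits 0) (P (enc t) N j) (ex_intro _ y HPy)).
  fold (slope (enc t) N j) in Hsl.
  destruct Hsl as [t' [Ht' [q' Hq']]].
  apply Henc in Ht'. subst t'.
  destruct HPy as [t'' [Ht'' [q'' Hq'']]]. apply Henc in Ht''. subst t''.
  destruct (Hal t) as [Hnc [Hgeo Hpp]].
  assert (Hlo : 0 <= INR j / INR (S N)) by lra.
  assert (Hlt : INR j / INR (S N) < INR (S j) / INR (S N)).
  { unfold Rdiv. apply Rmult_lt_compat_r.
    apply Rinv_0_lt_compat. apply lt_0_INR. lia. apply lt_INR. lia. }
  destruct (NC E X (alpha t) HE Hnc Hgeo Hpp _ _ Hlo Hlt ltac:(lra))
    as [s1 [s2 [Hs1 [Hs2 Hne]]]].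
  destruct (Hq' s1 Hs1) as [a1 Ha1]. destruct (Hq' s2 Hs2) as [a2 Ha2].
  destruct (Hq'' s1 Hs1) as [b1 Hb1]. destruct (Hq'' s2 Hs2) as [b2 Hb2].
  apply (Hy (Cantor.to_nat (enc t, Cantor.to_nat (N, j)))).
  unfold u. rewrite !Cantor.cancel_of_to.
  destruct (Req_dec (b2 - b1) 0) as [Hz|Hz].
  { exfalso. apply Hne. rewrite Hb1, Hb2. replace b2 with b1 by lra; reflexivity. }
  rewrite Ha1 in Hb1. rewrite Ha2 in Hb2.
  pose proof (f_equal fst Hb1) as F1. pose proof (f_equal snd Hb1) as G1.
  pose proof (f_equal fst Hb2) as F2. pose proof (f_equal snd Hb2) as G2.
  simpl in F1, G1, F2, G2.
  set (y' := slope (enc t) N j) in *.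
  assert ((b2 - b1) * (y - y') = 0) by nra.
  apply Rmult_integral in H. destruct H; lra.
Qed.
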